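(* Let $a_x,b_x$ be linearly independent linear forms. (A1) For a linear form $f$: $J[f,a_x,b_x]=0$ iff $f=g_0a_x+h_0b_x$ for some $g_0,h_0\in\mathbb C$. (B1) For a quadratic form $f$: $J[f,a_x,b_x]=0$ iff $f=g_0a_x^2+h_0a_xb_x+k_0b_x^2$ for some constants $g_0,h_0,k_0$. (B2) For a quadratic form $f$: $J^2[f,a_x^2,b_x^2]=0$ iff $f=g_xa_x+h_xb_x$ for some linear forms $g_x,h_x$. (C1) For a cubic form $f$: $J[f,a_x,b_x]=0$ iff $f=g_0a_x^3+h_0a_x^2b_x+k_0a_xb_x^2+i_0b_x^3$ for some constants $g_0,h_0,k_0,i_0$. (C2) For a cubic form $f$: $J^2[f,a_x^2,b_x^2]=0$ iff $f=g_xa_x^2+h_xa_xb_x+k_xb_x^2$ for some linear forms $g_x,h_x,k_x$. (C3) For a cubic form $f$: $J^3[f,a_x^3,b_x^3]=0$ iff $f=g_{xx}a_x+h_{xx}b_x$ for some quadratic forms $g_{xx},h_{xx}$.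
   Context: Forms are homogeneous polynomials with complex coefficients in $x=(x_1,x_2,x_3)$. For $a\in\mathbb C^3$, $a_x=a_1x_1+a_2x_2+a_3x_3$. For forms $f,g,h$ and $n\ge1$, the $n$-th transvectant is $J^n[f,g,h]=\big(\Omega^n(f(x)g(y)h(z))\big)|_{y=z=x}$, where $\Omega$ is the determinant of the operator matrix with rows $(\partial/\partial x_i)$, $(\partial/\partial y_i)$, $(\partial/\partial z_i)$. Equivalently, expand $\det(a,b,c)^n$ and replace each monomial $a^\alpha b^\beta c^\gamma$ by $\partial^\alpha f\,\partial^\beta g\,\partial^\gamma h$. Write $J=J^1$ (the Jacobian determinant). *)

(* Defs.v *)
From HB Require Import structures.
From mathcomp Require Import all_boot all_order all_algebra all_fingroup.
From mathcomp Require Import mpoly.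
Set Implicit Arguments. Unset Strict Implicit. Unset Printing Implicit Defensive.
Import Order.TTheory GRing.Theory Num.Theory.
Local Open Scope ring_scope.

(* Ternary forms over an algebraically closed numeric field C (e.g. the complex
   numbers): polynomials in {mpoly C[3]} in x = (x_0, x_1, x_2). *)

Section Transvectant.
Variable C : numClosedFieldType.

Definition linform (a : 'I_3 -> C) : {mpoly C[3]} := \sum_(i < 3) a i *: 'X_i.

Definition lin_indep (a b : 'I_3 -> C) : Prop :=
  forall s t : C, (forall i, s * a i + t * b i = 0) -> s = 0 /\ t = 0.

(* variables of the 9-variable ring: block k = 0,1,2 stands for x, y, z *)
Definition var9 (k i : 'I_3) : 'I_9 := inord (3 * k + i).

Definition emb (k : 'I_3) (p : {mpoly C[3]}) : {mpoly C[9]} :=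
  p \mPo [tuple 'X_(var9 k i) | i < 3].

(* Omega = det of the operator matrix with rows d/dx_i, d/dy_i, d/dz_i *)
Definition Omega (p : {mpoly C[9]}) : {mpoly C[9]} :=
  \sum_(s : 'S_3) (-1) ^+ s *:
     mderiv (var9 0 (s 0)) (mderiv (var9 1 (s 1)) (mderiv (var9 2 (s 2)) p)).

(* restriction y = z = x *)
Definition diag3 (q : {mpoly C[9]}) : {mpoly C[3]} :=
  q \mPo [tuple 'X_(inord (val j %% 3) : 'I_3) | j < 9].

Definition transv (n : nat) (f g h : {mpoly C[3]}) : {mpoly C[3]} :=
  diag3 (iter n Omega (emb 0 f * emb 1 g * emb 2 h)).

End Transvectant.

(* Main.v *)
Require Import Defs.
From HB Require Import structures.
From mathcomp Require Import all_boot all_order all_algebra all_fingroup.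
From mathcomp Require Import mpoly zify ring.
Set Implicit Arguments. Unset Strict Implicit. Unset Printing Implicit Defensive.
Import Order.TTheory GRing.Theory Num.Theory.
Local Open Scope ring_scope.


Lemma mpoly_ind3 {R : comNzRingType} {n : nat} (P : {mpoly R[n]} -> Prop) :
  (forall c, P c%:MP) -> (forall i, P 'X_i) ->
  (forall p q, P p -> P q -> P (p + q)) ->
  (forall p q, P p -> P q -> P (p * q)) -> forall p, P p.
Proof.
move=> hC hX hD hM p; rewrite [p]mpolyE.
have P0 : P 0 by have := hC 0; rewrite raddf0.
have P1 : P 1 by have := hC 1; rewrite mpolyC1.
apply: (big_ind P) => // m Hm; rewrite -mul_mpolyC; apply: (hM); first exact: (hC).
rewrite mpolyXE_id; apply: (big_ind P) => // i Hi.
elim: (m i) => [|k ih]; first by rewrite expr0.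
by rewrite exprS; apply: (hM).
Qed.

Lemma comp_mpolyA {R : comNzRingType} {n k l : nat} (p : {mpoly R[n]})
   (lq : n.-tuple {mpoly R[k]}) (lr : k.-tuple {mpoly R[l]}) :
  (p \mPo lq) \mPo lr = p \mPo [tuple (tnth lq i) \mPo lr | i < n].
Proof.
move: p; apply: mpoly_ind3.
- by move=> c; rewrite !comp_mpolyC.
- by move=> i; rewrite !comp_mpolyXU -!tnth_nth tnth_map tnth_ord_tuple.
- by move=> p q hp hq; rewrite !raddfD /= hp hq.
- by move=> p q hp hq; rewrite !rmorphM /= hp hq.
Qed.


Lemma var9_val (k i : 'I_3) : val (var9 k i) = (3 * k + i)%N.
Proof. rewrite /var9; apply: inordK; have := ltn_ord k; have := ltn_ord i; lia. Qed.

Lemma var9_eq (k i k' i' : 'I_3) : (var9 k i == var9 k' i') = (k == k') && (i == i').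
Proof.
apply/idP/idP.
  move/eqP/(congr1 val); rewrite !var9_val => h.
  have := ltn_ord k; have := ltn_ord i; have := ltn_ord k'; have := ltn_ord i' => *.
  apply/andP; split; apply/eqP/val_inj => /=; lia.
by case/andP => /eqP -> /eqP ->.
Qed.

Lemma mderivXU {R : comNzRingType} {n : nat} (j v : 'I_n) :
  mderiv j ('X_v : {mpoly R[n]}) = ((v == j)%:R)%:MP.
Proof.
rewrite mderivX mnm1E; case: eqP => [->|_].
  have -> : (U_(j) - U_(j) = 0)%MM by apply/mnmP => l; rewrite mnmBE subnn mnm0E.
  by rewrite mpolyX0 scale1r mpolyC1.
by rewrite scale0r raddf0.
Qed.

Lemma embX {C : numClosedFieldType} (k i : 'I_3) :
  emb k ('X_i : {mpoly C[3]}) = 'X_(var9 k i).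
Proof. by rewrite /emb comp_mpolyXU -tnth_nth tnth_map tnth_ord_tuple. Qed.

Lemma embC {C : numClosedFieldType} (k : 'I_3) (c : C) : emb k c%:MP = c%:MP.
Proof. by rewrite /emb comp_mpolyC. Qed.

Lemma embD {C : numClosedFieldType} (k : 'I_3) (p q : {mpoly C[3]}) :
  emb k (p + q) = emb k p + emb k q.
Proof. exact: raddfD. Qed.
Lemma embM {C : numClosedFieldType} (k : 'I_3) (p q : {mpoly C[3]}) :
  emb k (p * q) = emb k p * emb k q.
Proof. exact: rmorphM. Qed.
Lemma embZ {C : numClosedFieldType} (k : 'I_3) c (p : {mpoly C[3]}) :
  emb k (c *: p) = c *: emb k p.
Proof. exact: linearZ. Qed.
Lemma emb1 {C : numClosedFieldType} (k : 'I_3) : emb k (1 : {mpoly C[3]}) = 1.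
Proof. exact: rmorph1. Qed.
Lemma emb0 {C : numClosedFieldType} (k : 'I_3) : emb k (0 : {mpoly C[3]}) = 0.
Proof. exact: raddf0. Qed.

Lemma dE {C : numClosedFieldType} (k k' j : 'I_3) (p : {mpoly C[3]}) :
  mderiv (var9 k j) (emb k' p) = (k == k')%:R *: emb k' (mderiv j p).
Proof.
move: p; apply: mpoly_ind3.
- by move=> c; rewrite embC !mderivC emb0 scaler0.
- move=> i; rewrite embX !mderivXU embC var9_eq.
  by rewrite [k' == k]eq_sym; case: (k == k'); case: (i == j); rewrite /= ?scale1r ?scale0r ?raddf0.
- by move=> p q hp hq; rewrite embD !mderivD hp hq embD scalerDr.
- move=> p q hp hq; rewrite embM !mderivM hp hq.
  by rewrite embD !embM scalerDr -scalerAl -scalerAr.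
Qed.


Lemma Omega_prod {C : numClosedFieldType} (f g h : {mpoly C[3]}) :
  Omega (emb 0 f * emb 1 g * emb 2 h) =
  \sum_(s : 'S_3) (-1) ^+ s *:
     (emb 0 (mderiv (s 0) f) * emb 1 (mderiv (s 1) g) * emb 2 (mderiv (s 2) h)).
Proof.
rewrite /Omega; apply: eq_bigr => s _; congr (_ *: _).
rewrite !mderivM !dE /= !(scale0r, scale1r, mulr0, mul0r, add0r, addr0).
rewrite !mderivM !dE /= !(scale0r, scale1r, mulr0, mul0r, add0r, addr0).
rewrite !mderivM !dE /= !(scale0r, scale1r, mulr0, mul0r, add0r, addr0).
done.
Qed.

Definition Dab {C : numClosedFieldType} (a b : 'I_3 -> C) (f : {mpoly C[3]}) :=
  \sum_(s : 'S_3) ((-1) ^+ s * a (s 1) * b (s 2)) *: mderiv (s 0) f.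

Lemma deriv_linform {C : numClosedFieldType} (a : 'I_3 -> C) j :
  mderiv j (linform a) = (a j)%:MP.
Proof.
rewrite /linform raddf_sum (bigD1 j) //= big1 => [|i /negPf ij].
  by rewrite addr0 mderivZ mderivXU eqxx -mul_mpolyC mpolyC1 mulr1.
by rewrite mderivZ mderivXU ij /= mulr0n mpolyC0 scaler0.
Qed.

Lemma deriv_pow_lin {C : numClosedFieldType} (a : 'I_3 -> C) j m :
  mderiv j (linform a ^+ m.+1) = (m.+1%:R * a j) *: linform a ^+ m.
Proof.
elim: m => [|m ih].
  by rewrite expr1 expr0 deriv_linform mul1r -mul_mpolyC mulr1.
rewrite exprS mderivM ih deriv_linform -scalerAr -exprS mul_mpolyC -scalerDl.
by congr (_ *: _); rewrite -addn1 natrD; ring.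
Qed.

Lemma emb_sum {C : numClosedFieldType} (k : 'I_3) (I : finType) (F : I -> {mpoly C[3]}) :
  emb k (\sum_i F i) = \sum_i emb k (F i).
Proof. exact: raddf_sum. Qed.

Lemma Omega_step {C : numClosedFieldType} (a b : 'I_3 -> C) f m p :
  Omega (emb 0 f * emb 1 (linform a ^+ m.+1) * emb 2 (linform b ^+ p.+1)) =
  (m.+1%:R * p.+1%:R) *: (emb 0 (Dab a b f) * emb 1 (linform a ^+ m) * emb 2 (linform b ^+ p)).
Proof.
rewrite Omega_prod /Dab emb_sum !mulr_suml scaler_sumr; apply: eq_bigr => s _.
rewrite !deriv_pow_lin !embZ -!mul_mpolyC !mpolyCM.
move: (emb 0 _) (emb 1 _) (emb 2 _) ((-1) ^+ s)%:MP (m.+1%:R)%:MP (p.+1%:R)%:MP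
  (a (s 1))%:MP (b (s 2))%:MP => X Y Z S1 M1 P1 A1 B1.
ring.
Qed.


Lemma diag_emb0 {C : numClosedFieldType} (p : {mpoly C[3]}) : diag3 (emb 0 p) = p.
Proof.
rewrite /diag3 /emb comp_mpolyA.
rewrite -[RHS]comp_mpoly_id; congr comp_mpoly.
apply: eq_from_tnth => i; rewrite !tnth_map !tnth_ord_tuple.
rewrite comp_mpolyXU -tnth_nth tnth_map tnth_ord_tuple.
congr mpolyX; congr mnm1; apply: val_inj => /=.
rewrite var9_val.
have -> : (3 * (0%R : 'I_3) + i = i)%N by [].
by rewrite modn_small // inord_val.
Qed.

Lemma diag3Z {C : numClosedFieldType} c (p : {mpoly C[9]}) : diag3 (c *: p) = c *: diag3 p.
Proof. exact: linearZ. Qed.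

Lemma OmegaZ {C : numClosedFieldType} c (p : {mpoly C[9]}) : Omega (c *: p) = c *: Omega p.
Proof.
rewrite /Omega scaler_sumr; apply: eq_bigr => s _.
by rewrite !mderivZ !scalerA mulrC.
Qed.

Lemma transv1E {C : numClosedFieldType} (a b : 'I_3 -> C) f :
  transv 1 f (linform a) (linform b) = Dab a b f.
Proof.
have h := Omega_step a b f 0 0; rewrite !expr1 !expr0 !emb1 !mulr1 scale1r in h.
by rewrite /transv /= h diag_emb0.
Qed.

Lemma transv2E {C : numClosedFieldType} (a b : 'I_3 -> C) f :
  transv 2 f (linform a ^+ 2) (linform b ^+ 2) = 4%:R *: Dab a b (Dab a b f).
Proof.
rewrite /transv /= Omega_step OmegaZ Omega_step !expr0 !emb1 !mulr1 scale1r.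
by rewrite diag3Z diag_emb0 -natrM.
Qed.

Lemma transv3E {C : numClosedFieldType} (a b : 'I_3 -> C) f :
  transv 3 f (linform a ^+ 3) (linform b ^+ 3) = 36%:R *: Dab a b (Dab a b (Dab a b f)).
Proof.
rewrite /transv /= Omega_step !OmegaZ Omega_step !OmegaZ Omega_step !expr0 !emb1 !mulr1.
by rewrite !scalerA diag3Z diag_emb0 -!natrM.
Qed.


Definition Mv {C : numClosedFieldType} (a b v : 'I_3 -> C) : 'M[C]_3 :=
  \matrix_(r, k) (if r == 0 then v k else if r == 1 then a k else b k).

Lemma det_Mv {C : numClosedFieldType} (a b v : 'I_3 -> C) :
  \det (Mv a b v) = v 0 * (a 1 * b 2 - a 2 * b 1) + v 1 * (a 2 * b 0 - a 0 * b 2)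
                    + v 2 * (a 0 * b 1 - a 1 * b 0).
Proof.
rewrite (expand_det_row _ 0) !big_ord_recl big_ord0 /cofactor.
rewrite !(expand_det_row _ 0) !big_ord_recl !big_ord0 /cofactor !det_mx11 !mxE /=.
pose a' n := a (inord n); pose b' n := b (inord n); pose v' n := v (inord n).
have Ha i : a i = a' (val i) by rewrite /a' inord_val.
have Hb i : b i = b' (val i) by rewrite /b' inord_val.
have Hv i : v i = v' (val i) by rewrite /v' inord_val.
rewrite !Ha !Hb !Hv /= /bump /=.
have -> : (1 %% 3 = 1)%N by [].
have -> : ((1 %% 3 + 1 %% 3) %% 3 = 2)%N by [].
ring.
Qed.


Lemma ord3_cases (P : 'I_3 -> Prop) : P 0 -> P 1 -> P 2 -> forall i, P i.
Proof.
move=> h0 h1 h2 [[|[|[|//]]] Hi].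
- by have -> : Ordinal Hi = 0 by apply: val_inj.
- by have -> : Ordinal Hi = 1 by apply: val_inj.
- by have -> : Ordinal Hi = 2 by apply: val_inj.
Qed.

Definition detv {C : numClosedFieldType} (a b v : 'I_3 -> C) :=
  v 0 * (a 1 * b 2 - a 2 * b 1) + v 1 * (a 2 * b 0 - a 0 * b 2)
                    + v 2 * (a 0 * b 1 - a 1 * b 0).

Section DabFacts.
Context {C : numClosedFieldType} (a b : 'I_3 -> C).
Local Notation D := (Dab a b).

Lemma DabD p q : D (p + q) = D p + D q.
Proof. by rewrite /Dab -big_split; apply: eq_bigr => s _; rewrite mderivD scalerDr. Qed.

Lemma DabZ c p : D (c *: p) = c *: D p.
Proof. by rewrite /Dab scaler_sumr; apply: eq_bigr => s _; rewrite mderivZ !scalerA mulrC. Qed.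

Lemma Dab0 : D 0 = 0.
Proof. by have := DabZ 0 0; rewrite !scale0r. Qed.

Lemma DabC c : D c%:MP = 0.
Proof. by rewrite /Dab big1 // => s _; rewrite mderivC scaler0. Qed.

Lemma DabM p q : D (p * q) = D p * q + p * D q.
Proof.
rewrite /Dab mulr_suml mulr_sumr -big_split; apply: eq_bigr => s _.
by rewrite mderivM scalerDr scalerAl scalerAr.
Qed.

Lemma Dab_sum (I : Type) (r : seq I) (F : I -> {mpoly C[3]}) :
  D (\sum_(i <- r) F i) = \sum_(i <- r) D (F i).
Proof.
elim: r => [|x r ih]; first by rewrite !big_nil Dab0.
by rewrite !big_cons DabD ih.
Qed.

Lemma Dab_linform v : D (linform v) = (detv a b v)%:MP.
Proof.
rewrite /Dab; under eq_bigr do rewrite deriv_linform -mul_mpolyC -rmorphM.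
rewrite -rmorph_sum /=; congr mpolyC.
rewrite -[RHS](det_Mv a b v) /determinant; apply: eq_bigr => s _.
rewrite !big_ord_recl big_ord0 !mxE /=.
have -> : lift ord0 ord0 = 1 :> 'I_3 by apply: val_inj.
have -> : lift ord0 (lift ord0 ord0) = 2 :> 'I_3 by apply: val_inj.
have -> : ord0 = 0 :> 'I_3 by apply: val_inj.
rewrite /=.
by move: ((-1) ^+ s) (a (s 1)) (b (s 2)) (v (s 0)) => x y z w; ring.
Qed.

Lemma linform_delta k : linform (fun j => (j == k)%:R) = ('X_k : {mpoly C[3]}).
Proof.
rewrite /linform (bigD1 k) //= eqxx scale1r big1 ?addr0 // => j /negPf ->.
by rewrite scale0r.
Qed.

Lemma DabX k : D 'X_k = (detv a b (fun j => (j == k)%:R))%:MP.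
Proof. by rewrite -linform_delta Dab_linform. Qed.

Lemma Dab_a : D (linform a) = 0.
Proof. by rewrite Dab_linform /detv (_ : _ + _ = 0) ?mpolyC0 //; ring. Qed.

Lemma Dab_b : D (linform b) = 0.
Proof. by rewrite Dab_linform /detv (_ : _ + _ = 0) ?mpolyC0 //; ring. Qed.

Lemma Dab_kill p q : D q = 0 -> D (p * q) = D p * q.
Proof. by move=> h; rewrite DabM h mulr0 addr0. Qed.

Lemma Dab_killn n p q : D q = 0 -> iter n D (p * q) = iter n D p * q.
Proof. by move=> h; elim: n => //= n ->; rewrite Dab_kill. Qed.

Lemma Dab_Mz p q : D p = 0 -> D q = 0 -> D (p * q) = 0.
Proof. by move=> hp hq; rewrite Dab_kill // hp mul0r. Qed.

Lemma Dab_Xz p k : D p = 0 -> D (p ^+ k) = 0.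
Proof.
move=> hp; elim: k => [|k ih]; first by rewrite expr0 -mpolyC1 DabC.
by rewrite exprS Dab_Mz.
Qed.

End DabFacts.


Lemma mderiv_homogS {C : numClosedFieldType} (j : 'I_3) (d : nat) (p : {mpoly C[3]}) :
  p \is d.+1.-homog -> mderiv j p \is d.-homog.
Proof.
move=> hp; apply/dhomogP => m; rewrite mcoeff_msupp mcoeff_deriv => hm.
have : p@_(m + U_(j)) != 0 by apply: contraNneq hm => ->; rewrite mul0rn.
rewrite -mcoeff_msupp => /(dhomog_mf hp) h.
have : (mdeg m + 1 = d.+1)%N by rewrite -[X in (_ + X)%N](mdeg1 j) -mdegD; exact: h.
rewrite addn1.
by case.
Qed.

Lemma mderiv_homog0 {C : numClosedFieldType} (j : 'I_3) (p : {mpoly C[3]}) :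
  p \is 0.-homog -> mderiv j p = 0.
Proof.
move=> hp; apply/mpolyP => m; rewrite mcoeff_deriv mcoeff0.
rewrite (dhomog_nemf_coeff hp) ?mul0rn //; apply/eqP => h.
have : (mdeg m + 1 = 0)%N by rewrite -[X in (_ + X)%N](mdeg1 j) -mdegD; exact: h.
by rewrite addn1.
Qed.

Lemma Dab_homogS {C : numClosedFieldType} (a b : 'I_3 -> C) d (p : {mpoly C[3]}) :
  p \is d.+1.-homog -> Dab a b p \is d.-homog.
Proof.
move=> hp; rewrite /Dab; apply: rpred_sum => s _; apply: rpredZ.
exact: mderiv_homogS.
Qed.

Lemma Dab_homog0 {C : numClosedFieldType} (a b : 'I_3 -> C) (p : {mpoly C[3]}) :
  p \is 0.-homog -> Dab a b p = 0.
Proof.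
by move=> hp; rewrite /Dab big1 // => s _; rewrite mderiv_homog0 // scaler0.
Qed.

Lemma Dab_iter_homog {C : numClosedFieldType} (a b : 'I_3 -> C) n d (p : {mpoly C[3]}) :
  (d < n)%N -> p \is d.-homog -> iter n (Dab a b) p = 0.
Proof.
elim: n d p => [//|n ih] [|d] p hdn hp; rewrite iterSr.
  rewrite Dab_homog0 //; elim: (n) => //= k ->; exact: Dab0.
by rewrite (ih d) // Dab_homogS.
Qed.

Lemma linform_homog {C : numClosedFieldType} (v : 'I_3 -> C) : linform v \is 1.-homog.
Proof.
by apply: rpred_sum => k _; apply: rpredZ; rewrite dhomogX; apply/eqP; exact: mdeg1.
Qed.


Section Comp.
Context {C : numClosedFieldType}.
Implicit Types (p g : {mpoly C[3]}) (lq : 3.-tuple {mpoly C[3]}).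

Lemma prod3 (F : 'I_3 -> {mpoly C[3]}) : \prod_(i < 3) F i = F 0 * F 1 * F 2.
Proof.
rewrite !big_ord_recl big_ord0 mulr1 mulrA.
have -> : lift ord0 ord0 = 1 :> 'I_3 by apply: val_inj.
by have -> : lift ord0 (lift ord0 ord0) = 2 :> 'I_3 by apply: val_inj.
Qed.

Lemma sum3 (F : 'I_3 -> {mpoly C[3]}) : \sum_(i < 3) F i = F 0 + F 1 + F 2.
Proof.
rewrite !big_ord_recl big_ord0 addr0 addrA.
have -> : lift ord0 ord0 = 1 :> 'I_3 by apply: val_inj.
by have -> : lift ord0 (lift ord0 ord0) = 2 :> 'I_3 by apply: val_inj.
Qed.

Lemma mdeg3 (m : 'X_{1..3}) : mdeg m = (m 0%R + m 1%R + m 2%R)%N.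
Proof.
rewrite mdegE !big_ord_recl big_ord0 addn0 addnA.
have -> : lift ord0 ord0 = 1 :> 'I_3 by apply: val_inj.
by have -> : lift ord0 (lift ord0 ord0) = 2 :> 'I_3 by apply: val_inj.
Qed.

Lemma compX3 (m : 'X_{1..3}) lq :
  'X_[m] \mPo lq = tnth lq 0 ^+ m 0 * tnth lq 1 ^+ m 1 * tnth lq 2 ^+ m 2.
Proof. by rewrite comp_mpolyX prod3. Qed.

Lemma comp_homog p lq d : p \is d.-homog -> (forall j, tnth lq j \is 1.-homog) ->
  p \mPo lq \is d.-homog.
Proof.
move=> hp hl; rewrite comp_mpolyEX big_seq; apply: rpred_sum => m hm; apply: rpredZ.
rewrite compX3.
have H := dhomogM (dhomogM (dhomogMn (m 0) (hl 0)) (dhomogMn (m 1) (hl 1)))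
                  (dhomogMn (m 2) (hl 2)).
have e : d = (1 * m 0%R + 1 * m 1%R + 1 * m 2%R)%N.
  rewrite !mul1n -mdeg3; have := dhomog_mf hp hm; by move=> ->.
by rewrite e.
Qed.

Lemma comp_linform v lq : linform v \mPo lq = \sum_k v k *: tnth lq k.
Proof.
rewrite /linform raddf_sum; apply: eq_bigr => k _.
by rewrite -[LHS]/(comp_mpoly lq (v k *: 'X_k)) comp_mpolyZ comp_mpolyXU -tnth_nth.
Qed.

Lemma comp_id3 p lq : (forall j, tnth lq j = 'X_j) -> p \mPo lq = p.
Proof.
move=> h; rewrite -[RHS]comp_mpoly_id; congr comp_mpoly.
by apply: eq_from_tnth => j; rewrite h tnth_map tnth_ord_tuple.
Qed.

Lemma linform_ext (v w : 'I_3 -> C) : (forall k, v k = w k) -> linform v = linform w.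
Proof. by move=> h; rewrite /linform; apply: eq_bigr => k _; rewrite h. Qed.

Lemma lin_mat (N M : 'M[C]_3) j :
  \sum_r N j r *: linform (fun k => M r k) = linform (fun k => (N *m M) j k).
Proof.
rewrite /linform; under eq_bigr do rewrite scaler_sumr.
rewrite exchange_big; apply: eq_bigr => k _ /=; rewrite mxE scaler_suml.
by apply: eq_bigr => r _; rewrite scalerA.
Qed.

Lemma Dab_comp (a b : 'I_3 -> C) lq (e : 'I_3 -> C) :
  (forall r, Dab a b (tnth lq r) = (e r)%:MP) ->
  forall g, Dab a b (g \mPo lq) = \sum_r e r *: (mderiv r g \mPo lq).
Proof.
move=> he; apply: mpoly_ind3.
- move=> c; rewrite comp_mpolyC DabC big1 // => r _.
  by rewrite mderivC comp_mpoly0 scaler0.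
- move=> j; rewrite comp_mpolyXU -tnth_nth he.
  rewrite (bigD1 j) //= big1 ?addr0 => [|r /negPf rj].
    by rewrite mderivXU eqxx comp_mpolyC mpolyC1 -mul_mpolyC mulr1.
  by rewrite mderivXU eq_sym rj comp_mpolyC /= mulr0n mpolyC0 scaler0.
- move=> p q hp hq; rewrite raddfD /= DabD hp hq -big_split /=.
  by apply: eq_bigr => r _; rewrite mderivD raddfD scalerDr.
- move=> p q hp hq; rewrite rmorphM /= DabM hp hq mulr_suml mulr_sumr -big_split /=.
  apply: eq_bigr => r _; rewrite mderivM raddfD /= !rmorphM /= scalerDr.
  by rewrite scalerAl scalerAr.
Qed.

End Comp.


Lemma exists_nz {C : numClosedFieldType} (a b : 'I_3 -> C) :
  lin_indep a b -> exists i : 'I_3, detv a b (fun j => (j == i)%:R) != 0.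
Proof.
move=> H.
have [h0|] := eqVneq (detv a b (fun j => (j == 0)%:R)) 0; last by exists 0.
have [h1|] := eqVneq (detv a b (fun j => (j == 1)%:R)) 0; last by exists 1.
have [h2|] := eqVneq (detv a b (fun j => (j == 2)%:R)) 0; last by exists 2.
exfalso; rewrite /detv /= !mul1r !mul0r ?add0r ?addr0 in h0 h1 h2.
have key : forall k, a k != 0 -> False.
  move=> k hk.
  suff hz : forall i, b k * a i + - a k * b i = 0.
    by have [_ /eqP] := H _ _ hz; rewrite oppr_eq0 (negPf hk).
  move=> i; have E : forall k : 'I_3, k = 0 \/ k = 1 \/ k = 2.
    by apply: ord3_cases; [left|right;left|right;right].
  by case: (E k) => [->|[->|->]]; case: (E i) => [->|[->|->]];
   first [ ring | (rewrite -[RHS]h0; ring) | (rewrite -[RHS]h1; ring)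
             | (rewrite -[RHS]h2; ring) | (rewrite -[RHS]oppr0 -[in RHS]h0; ring)
             | (rewrite -[RHS]oppr0 -[in RHS]h1; ring) | (rewrite -[RHS]oppr0 -[in RHS]h2; ring) ].
have [a0|/key//] := eqVneq (a 0) 0.
have [a1|/key//] := eqVneq (a 1) 0.
have [a2|/key//] := eqVneq (a 2) 0.
suff hz : forall i, 1 * a i + 0 * b i = 0.
  by have [/eqP] := H _ _ hz; rewrite oner_eq0.
by apply: ord3_cases; rewrite mul0r addr0 mul1r.
Qed.


Lemma iter_deriv_supp {C : numClosedFieldType} (j : 'I_3) n (g : {mpoly C[3]}) :
  iter n (mderiv j) g = 0 -> forall m, m \in msupp g -> (m j < n)%N.
Proof.
elim: n g => [|n ih] g h m hm.
  by move: hm; rewrite /= in h; rewrite h mcoeff_msupp mcoeff0 eqxx.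
rewrite iterSr in h; rewrite ltnNge; apply/negP => hn.
have mj : m j != 0%N by rewrite -lt0n; apply: leq_ltn_trans hn.
have hm' : (m - U_(j) + U_(j) = m)%MM by rewrite submK // lep1mP.
have : (m - U_(j))%MM \in msupp (mderiv j g).
  rewrite mcoeff_msupp mcoeff_deriv hm' mulrn_eq0 negb_or /= -mcoeff_msupp hm.
  done.
move/(ih _ h); rewrite mnmBE mnm1E eqxx subn1 ltnNge.
by rewrite -ltnS prednK ?lt0n // hn.
Qed.

Lemma repr_lemma {C : numClosedFieldType} (a b : 'I_3 -> C) (i : 'I_3) :
  detv a b (fun j => (j == i)%:R) != 0 ->
  forall n d (f : {mpoly C[3]}), f \is d.-homog -> iter n (Dab a b) f = 0 ->
  exists g : {mpoly C[3]},
    f = \sum_(m <- msupp g) g@_m *: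
          ('X_i ^+ m 0%R * linform a ^+ m 1%R * linform b ^+ m 2%R) /\
    (forall m, m \in msupp g -> (m 0%R + m 1%R + m 2%R = d)%N /\ (m 0%R < n)%N).
Proof.
move=> hg n d f hf hD.
set gam := detv a b (fun j => (j == i)%:R).
set M := Mv a b (fun j => (j == i)%:R).
have hdet : \det M = gam by rewrite det_Mv.
have hU : M \in unitmx by rewrite unitmxE hdet unitfE.
set N := invmx M.
pose phi := [tuple linform (fun k => M r k) | r < 3].
pose psi := [tuple linform (fun r => N j r) | j < 3].
have tphi r : tnth phi r = linform (fun k => M r k) by rewrite tnth_map tnth_ord_tuple.
have tpsi j : tnth psi j = linform (fun r => N j r) by rewrite tnth_map tnth_ord_tuple.
have idmx (A : 'M[C]_3) j : A = 1%:M -> linform (fun k => A j k) = 'X_j.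
  move=> ->; rewrite -linform_delta; apply: linform_ext => k.
  by rewrite !mxE eq_sym.
have hpp p : (p \mPo psi) \mPo phi = p.
  rewrite comp_mpolyA; apply: comp_id3 => j; rewrite tnth_map tpsi comp_linform.
  under eq_bigr do rewrite tphi.
  by rewrite lin_mat tnth_ord_tuple; apply: (idmx (N *m M)); exact: mulVmx.
have hpp' p : (p \mPo phi) \mPo psi = p.
  rewrite comp_mpolyA; apply: comp_id3 => j; rewrite tnth_map tphi comp_linform.
  under eq_bigr do rewrite tpsi.
  by rewrite lin_mat tnth_ord_tuple; apply: (idmx (M *m N)); exact: mulmxV.
set g := f \mPo psi.
have hgh : g \is d.-homog by apply: comp_homog => // j; rewrite tpsi linform_homog.
have hfg : f = g \mPo phi by rewrite hpp.
have hD1 h : Dab a b (h \mPo phi) = gam *: (mderiv 0 h \mPo phi).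
  rewrite (@Dab_comp _ a b phi (fun r => detv a b (fun k => M r k))); last first.
    by move=> r; rewrite tphi Dab_linform.
  rewrite sum3 /detv !mxE /=.
  rewrite [X in _ + X *: _](_ : _ = 0); last by ring.
  rewrite [X in _ + X *: _ + _](_ : _ = 0); last by ring.
  by rewrite !scale0r !addr0.
have hDn k h : iter k (Dab a b) (h \mPo phi) = gam ^+ k *: (iter k (mderiv 0) h \mPo phi).
  elim: k => [|k ih] /=; first by rewrite expr0 scale1r.
  by rewrite ih DabZ hD1 scalerA exprSr.
have hz : iter n (mderiv 0) g = 0.
  move: hD; rewrite hfg hDn => /eqP; rewrite scaler_eq0 expf_eq0 (negPf hg) andbF /=.
  by move=> /eqP h0; rewrite -[LHS]hpp' h0 comp_mpoly0.
exists g; split.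
  rewrite {1}hfg comp_mpolyEX; apply: eq_bigr => m _; rewrite compX3.
  have -> : tnth phi 0 = 'X_i.
    by rewrite tphi -linform_delta; apply: linform_ext => k; rewrite mxE.
  have -> : tnth phi 1 = linform a by rewrite tphi; apply: linform_ext => k; rewrite mxE.
  by have -> : tnth phi 2 = linform b by rewrite tphi; apply: linform_ext => k; rewrite mxE.
move=> m hm; split; last exact: iter_deriv_supp hz m hm.
by rewrite -mdeg3; have := dhomog_mf hgh hm; move=> ->.
Qed.


Lemma mon_homog {C : numClosedFieldType} (i : 'I_3) (a b : 'I_3 -> C) x y z :
  'X_i ^+ x * linform a ^+ y * linform b ^+ z \is (x + y + z).-homog.
Proof.
have hX : ('X_i : {mpoly C[3]}) \is 1.-homog by rewrite dhomogX; apply/eqP; exact: mdeg1.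
have := dhomogM (dhomogM (dhomogMn x hX) (dhomogMn y (linform_homog a)))
                (dhomogMn z (linform_homog b)).
by rewrite !mul1n.
Qed.

Lemma sum_closed {C : numClosedFieldType} (Q : {mpoly C[3]} -> Prop) (g : {mpoly C[3]}) F :
  Q 0 -> (forall p q, Q p -> Q q -> Q (p + q)) -> (forall c p, Q p -> Q (c *: p)) ->
  (forall m, m \in msupp g -> Q (F m)) -> Q (\sum_(m <- msupp g) g@_m *: F m).
Proof.
move=> h0 hD hZ hF; rewrite big_seq; apply: (big_ind Q) => //.
by move=> m hm; apply: hZ; apply: hF.
Qed.



Lemma addACA3 (V : zmodType) (x1 y1 z1 x2 y2 z2 : V) :
  x1 + y1 + z1 + (x2 + y2 + z2) = (x1 + x2) + (y1 + y2) + (z1 + z2).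
Proof. by rewrite addrACA; congr (_ + _); rewrite addrACA. Qed.

Lemma addACA4 (V : zmodType) (x1 y1 z1 w1 x2 y2 z2 w2 : V) :
  x1 + y1 + z1 + w1 + (x2 + y2 + z2 + w2) = (x1 + x2) + (y1 + y2) + (z1 + z2) + (w1 + w2).
Proof. by rewrite addrACA; congr (_ + _); rewrite addACA3. Qed.

Lemma Dab_iter_kill {C : numClosedFieldType} (a b : 'I_3 -> C) n d (p q : {mpoly C[3]}) :
  (d < n)%N -> p \is d.-homog -> Dab a b q = 0 -> iter n (Dab a b) (p * q) = 0.
Proof. by move=> hdn hp hq; rewrite Dab_killn // (Dab_iter_homog a b hdn hp) mul0r. Qed.

Lemma iter_DabD {C : numClosedFieldType} (a b : 'I_3 -> C) n (p q : {mpoly C[3]}) :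
  iter n (Dab a b) (p + q) = iter n (Dab a b) p + iter n (Dab a b) q.
Proof. by elim: n => //= n ->; rewrite DabD. Qed.

Unset Implicit Arguments.
Ltac gen_ring := repeat match goal with |- context [?p ^+ ?n] => is_var n; move: (p ^+ n) => ? end; ring.
Ltac fin := rewrite ?scale0r ?scale1r ?add0r ?addr0 ?expr0 ?expr1 ?mul1r ?mulr1 ?mul0r ?mulr0.


Theorem lemma5p1 (C : numClosedFieldType) (a b : 'I_3 -> C) :
  lin_indep a b ->
  let ax := linform a in let bx := linform b in
  (* (A1) *)
  (forall f : {mpoly C[3]}, f \is 1.-homog ->
     (transv 1 f ax bx = 0 <->
      exists g0 h0 : C, f = g0 *: ax + h0 *: bx)) /\
  (* (B1) *)
  (forall f : {mpoly C[3]}, f \is 2.-homog ->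
     (transv 1 f ax bx = 0 <->
      exists g0 h0 k0 : C, f = g0 *: ax ^+ 2 + h0 *: (ax * bx) + k0 *: bx ^+ 2)) /\
  (* (B2) *)
  (forall f : {mpoly C[3]}, f \is 2.-homog ->
     (transv 2 f (ax ^+ 2) (bx ^+ 2) = 0 <->
      exists gx hx : {mpoly C[3]}, gx \is 1.-homog /\ hx \is 1.-homog /\
        f = gx * ax + hx * bx)) /\
  (* (C1) *)
  (forall f : {mpoly C[3]}, f \is 3.-homog ->
     (transv 1 f ax bx = 0 <->
      exists g0 h0 k0 i0 : C, f = g0 *: ax ^+ 3 + h0 *: (ax ^+ 2 * bx)
                               + k0 *: (ax * bx ^+ 2) + i0 *: bx ^+ 3)) /\
  (* (C2) *)
  (forall f : {mpoly C[3]}, f \is 3.-homog ->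
     (transv 2 f (ax ^+ 2) (bx ^+ 2) = 0 <->
      exists gx hx kx : {mpoly C[3]},
        [/\ gx \is 1.-homog, hx \is 1.-homog & kx \is 1.-homog] /\
        f = gx * ax ^+ 2 + hx * (ax * bx) + kx * bx ^+ 2)) /\
  (* (C3) *)
  (forall f : {mpoly C[3]}, f \is 3.-homog ->
     (transv 3 f (ax ^+ 3) (bx ^+ 3) = 0 <->
      exists gxx hxx : {mpoly C[3]}, gxx \is 2.-homog /\ hxx \is 2.-homog /\
        f = gxx * ax + hxx * bx)).
Proof.
move=> hab; cbv zeta.
have [i hi] := exists_nz hab.
have hR := repr_lemma hi.
have DA := Dab_a a b; have DB := Dab_b a b.
have n4 : (4%:R : C) != 0 by rewrite pnatr_eq0.
have n36 : (36%:R : C) != 0 by rewrite pnatr_eq0.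
have DA2 : Dab a b (linform a ^+ 2) = 0 by exact: Dab_Xz.
have DB2 : Dab a b (linform b ^+ 2) = 0 by exact: Dab_Xz.
have DAB : Dab a b (linform a * linform b) = 0 by exact: Dab_Mz.
split; [|split; [|split; [|split; [|split]]]].
-
  move=> f hf; rewrite transv1E; split.
  + move=> hD; have [g [-> hc]] := hR 1%N 1%N f hf hD.
    apply: (@sum_closed _ (fun p => exists g0 h0 : C, p = g0 *: linform a + h0 *: linform b)).
    * by exists 0, 0; rewrite !scale0r addr0.
    * move=> p q [g1 [h1 ->]] [g2 [h2 ->]]; exists (g1 + g2), (h1 + h2).
      by rewrite !scalerDl addrACA.
    * by move=> c p [g1 [h1 ->]]; exists (c * g1), (c * h1); rewrite scalerDr !scalerA.
    * move=> m /hc [hs hl]; move: (m 0%R) (m 1%R) (m 2%R) hs hl => x y z hs hl.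
      have -> : x = 0%N by lia.
      case: y hs hl => [|y] hs hl.
        have -> : z = 1%N by lia.
        by exists 0, 1; rewrite scale0r add0r scale1r expr0 expr1 !mul1r.
      have -> : y = 0%N by lia. have -> : z = 0%N by lia.
      by exists 1, 0; rewrite scale0r addr0 scale1r !expr0 expr1 mul1r mulr1.
  + by case=> [g0 [h0 ->]]; rewrite DabD !DabZ DA DB !scaler0 addr0.
-
  move=> f hf; rewrite transv1E; split.
  + move=> hD; have [g [-> hc]] := hR 1%N 2%N f hf hD.
    apply: (@sum_closed _ (fun p => exists g0 h0 k0 : C, p = g0 *: linform a ^+ 2
       + h0 *: (linform a * linform b) + k0 *: linform b ^+ 2)).
    * by exists 0, 0, 0; rewrite !scale0r !addr0.
    * move=> p q [g1 [h1 [k1 ->]]] [g2 [h2 [k2 ->]]]; exists (g1 + g2), (h1 + h2), (k1 + k2).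
      by rewrite !scalerDl addACA3.
    * by move=> c p [g1 [h1 [k1 ->]]]; exists (c * g1), (c * h1), (c * k1); rewrite !scalerDr !scalerA.
    * move=> m /hc [hs hl]; move: (m 0%R) (m 1%R) (m 2%R) hs hl => x y z hs hl.
      have -> : x = 0%N by lia.
      case: y hs hl => [|[|[|y]]] hs hl; last by lia.
      - have -> : z = 2%N by lia. by exists 0, 0, 1; fin.
      - have -> : z = 1%N by lia. by exists 0, 1, 0; fin.
      - have -> : z = 0%N by lia. by exists 1, 0, 0; fin.
  + by case=> [g0 [h0 [k0 ->]]]; rewrite !DabD !DabZ DA2 DAB DB2 !scaler0 !addr0.
-
  move=> f hf; rewrite transv2E; split.
  + move=> /eqP; rewrite scaler_eq0 (negPf n4) /= => /eqP hD.
    have [g [-> hc]] := hR 2%N 2%N f hf hD.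
    apply: (@sum_closed _ (fun p => exists gx hx : {mpoly C[3]}, gx \is 1.-homog /\
       hx \is 1.-homog /\ p = gx * linform a + hx * linform b)).
    * exists 0, 0; split; first exact: rpred0.
      by split; [exact: rpred0 | rewrite !mul0r addr0].
    * move=> p q [g1 [h1 [hg1 [hh1 ->]]]] [g2 [h2 [hg2 [hh2 ->]]]].
      exists (g1 + g2), (h1 + h2); split; first exact: rpredD.
      by split; [exact: rpredD | rewrite !mulrDl addrACA].
    * move=> c p [g1 [h1 [hg1 [hh1 ->]]]]; exists (c *: g1), (c *: h1).
      split; first exact: rpredZ.
      by split; [exact: rpredZ | rewrite scalerDr -!scalerAl].
    * move=> m /hc [hs hl]; move: (m 0%R) (m 1%R) (m 2%R) hs hl => x y z hs hl.
      case: y hs hl => [|y] hs hl.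
      - case: z hs hl => [|z] hs hl; first by lia.
        exists 0, ('X_i ^+ x * linform a ^+ 0 * linform b ^+ z); split; first exact: rpred0.
        have e : (x + 0 + z = 1)%N by lia.
        split; first by have := mon_homog i a b x 0 z; rewrite e.
        rewrite exprS; move: ('X_i ^+ x) (linform a ^+ 0) (linform b ^+ z) (linform a) (linform b).
        by move=> P Q R S T; ring.
      - have e : (x + y + z = 1)%N by lia.
        exists ('X_i ^+ x * linform a ^+ y * linform b ^+ z), 0; split.
          by have := mon_homog i a b x y z; rewrite e.
        split; first exact: rpred0.
        rewrite exprS; move: ('X_i ^+ x) (linform a ^+ y) (linform b ^+ z) (linform a) (linform b).
        by move=> P Q R S T; ring.
  + case=> [g1 [h1 [hg [hh ->]]]].
    have k1 := Dab_iter_kill (isT : (1 < 2)%N) hg DA.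
    have k2 := Dab_iter_kill (isT : (1 < 2)%N) hh DB.
    by rewrite -[Dab a b (Dab a b _)]/(iter 2 (Dab a b) _) iter_DabD k1 k2 addr0 scaler0.
-
  move=> f hf; rewrite transv1E; split.
  + move=> hD; have [g [-> hc]] := hR 1%N 3%N f hf hD.
    apply: (@sum_closed _ (fun p => exists g0 h0 k0 i0 : C, p = g0 *: linform a ^+ 3
       + h0 *: (linform a ^+ 2 * linform b) + k0 *: (linform a * linform b ^+ 2)
       + i0 *: linform b ^+ 3)).
    * by exists 0, 0, 0, 0; rewrite !scale0r !addr0.
    * move=> p q [g1 [h1 [k1 [i1 ->]]]] [g2 [h2 [k2 [i2 ->]]]].
      exists (g1 + g2), (h1 + h2), (k1 + k2), (i1 + i2).
      by rewrite !scalerDl addACA4.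
    * move=> c p [g1 [h1 [k1 [i1 ->]]]]; exists (c * g1), (c * h1), (c * k1), (c * i1).
      by rewrite !scalerDr !scalerA.
    * move=> m /hc [hs hl]; move: (m 0%R) (m 1%R) (m 2%R) hs hl => x y z hs hl.
      have -> : x = 0%N by lia.
      case: y hs hl => [|[|[|[|y]]]] hs hl; last by lia.
      - have -> : z = 3%N by lia. by exists 0, 0, 0, 1; fin.
      - have -> : z = 2%N by lia. by exists 0, 0, 1, 0; fin.
      - have -> : z = 1%N by lia. by exists 0, 1, 0, 0; fin.
      - have -> : z = 0%N by lia. by exists 1, 0, 0, 0; fin.
  + case=> [g0 [h0 [k0 [i0 ->]]]]; rewrite !DabD !DabZ (Dab_Xz _ DA) (Dab_Xz _ DB).
    by rewrite (Dab_Mz DA2 DB) (Dab_Mz DA DB2) !scaler0 !addr0.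
-
  move=> f hf; rewrite transv2E; split.
  + move=> /eqP; rewrite scaler_eq0 (negPf n4) /= => /eqP hD.
    have [g [-> hc]] := hR 2%N 3%N f hf hD.
    apply: (@sum_closed _ (fun p => exists gx hx kx : {mpoly C[3]},
       [/\ gx \is 1.-homog, hx \is 1.-homog & kx \is 1.-homog] /\
       p = gx * linform a ^+ 2 + hx * (linform a * linform b) + kx * linform b ^+ 2)).
    * exists 0, 0, 0; split; first by split; exact: rpred0.
      by rewrite !mul0r !addr0.
    * move=> p q [g1 [h1 [k1 [[hg1 hh1 hk1] ->]]]] [g2 [h2 [k2 [[hg2 hh2 hk2] ->]]]].
      exists (g1 + g2), (h1 + h2), (k1 + k2); split; first by split; exact: rpredD.
      by rewrite !mulrDl addACA3.
    * move=> c p [g1 [h1 [k1 [[hg1 hh1 hk1] ->]]]]; exists (c *: g1), (c *: h1), (c *: k1).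
      split; first by split; exact: rpredZ.
      by rewrite !scalerDr -!scalerAl.
    * move=> m /hc [hs hl]; move: (m 0%R) (m 1%R) (m 2%R) hs hl => x y z hs hl.
      case: y hs hl => [|[|y]] hs hl.
      - case: z hs hl => [|[|z]] hs hl; try by lia.
        have e : (x + 0 + z = 1)%N by lia.
        exists 0, 0, ('X_i ^+ x * linform a ^+ 0 * linform b ^+ z); split.
          split; try exact: rpred0.
          by have := mon_homog i a b x 0 z; rewrite e.
        by rewrite !exprS; gen_ring.
      - case: z hs hl => [|[|z]] hs hl; try by lia.
          have e : (x + 0 + 0 = 1)%N by lia.
          exists 0, ('X_i ^+ x * linform a ^+ 0 * linform b ^+ 0), 0; split.
            split; try exact: rpred0.
            by have := mon_homog i a b x 0 0; rewrite e.
          by rewrite !exprS; gen_ring.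
        have e : (x + 1 + z = 1)%N by lia.
        exists 0, 0, ('X_i ^+ x * linform a ^+ 1 * linform b ^+ z); split.
          split; try exact: rpred0.
          by have := mon_homog i a b x 1 z; rewrite e.
        by rewrite !exprS; gen_ring.
      - have e : (x + y + z = 1)%N by lia.
        exists ('X_i ^+ x * linform a ^+ y * linform b ^+ z), 0, 0; split.
          split; try exact: rpred0.
          by have := mon_homog i a b x y z; rewrite e.
        by rewrite !exprS; gen_ring.
  + case=> [g1 [h1 [k1 [[hg hh hk] ->]]]].
    have k1' := Dab_iter_kill (isT : (1 < 2)%N) hg DA2.
    have k2' := Dab_iter_kill (isT : (1 < 2)%N) hh DAB.
    have k3' := Dab_iter_kill (isT : (1 < 2)%N) hk DB2.
    by rewrite -[Dab a b (Dab a b _)]/(iter 2 (Dab a b) _) !iter_DabD k1' k2' k3' !addr0 scaler0.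
-
  move=> f hf; rewrite transv3E; split.
  + move=> /eqP; rewrite scaler_eq0 (negPf n36) /= => /eqP hD.
    have [g [-> hc]] := hR 3%N 3%N f hf hD.
    apply: (@sum_closed _ (fun p => exists gx hx : {mpoly C[3]}, gx \is 2.-homog /\
       hx \is 2.-homog /\ p = gx * linform a + hx * linform b)).
    * exists 0, 0; split; first exact: rpred0.
      by split; [exact: rpred0 | rewrite !mul0r addr0].
    * move=> p q [g1 [h1 [hg1 [hh1 ->]]]] [g2 [h2 [hg2 [hh2 ->]]]].
      exists (g1 + g2), (h1 + h2); split; first exact: rpredD.
      by split; [exact: rpredD | rewrite !mulrDl addrACA].
    * move=> c p [g1 [h1 [hg1 [hh1 ->]]]]; exists (c *: g1), (c *: h1).
      split; first exact: rpredZ.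
      by split; [exact: rpredZ | rewrite scalerDr -!scalerAl].
    * move=> m /hc [hs hl]; move: (m 0%R) (m 1%R) (m 2%R) hs hl => x y z hs hl.
      case: y hs hl => [|y] hs hl.
      - case: z hs hl => [|z] hs hl; first by lia.
        exists 0, ('X_i ^+ x * linform a ^+ 0 * linform b ^+ z); split; first exact: rpred0.
        have e : (x + 0 + z = 2)%N by lia.
        split; first by have := mon_homog i a b x 0 z; rewrite e.
        by rewrite !exprS; gen_ring.
      - have e : (x + y + z = 2)%N by lia.
        exists ('X_i ^+ x * linform a ^+ y * linform b ^+ z), 0; split.
          by have := mon_homog i a b x y z; rewrite e.
        split; first exact: rpred0.
        by rewrite !exprS; gen_ring.
  + case=> [g1 [h1 [hg [hh ->]]]].
    have k1 := Dab_iter_kill (isT : (2 < 3)%N) hg DA.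
    have k2 := Dab_iter_kill (isT : (2 < 3)%N) hh DB.
    by rewrite -[Dab a b (Dab a b (Dab a b _))]/(iter 3 (Dab a b) _) iter_DabD k1 k2 addr0 scaler0.
Qed.
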